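(* In the setting described in the context, let $q\in\{1,\dots,n\}$. The following are equivalent: (1) there exists a $q$-minitive capacity $\mu:2^{\mathcal C}\to L$ with $S_\mu(x^{(k)})=\alpha^{(k)}$ for all $k\in\{1,\dots,N\}$; (2) the reduced min–max system $(\Sigma_q)$ is consistent and there exists $A\subsetneq\mathcal C$ with $|A|=n-q$ and $f_q(A)=0$.
   Context: Let $\mathcal C=\{1,\dots,n\}$ and let $L$ be either a finite totally ordered set $0=\xi_1<\dots<\xi_l=1$ or $L=[0,1]$. A capacity is a map $\mu:2^{\mathcal C}\to L$ with $\mu(\emptyset)=0$, $\mu(\mathcal C)=1$, monotone for inclusion; it is $q$-minitive if for all $X$ with $|X|<n-q$, $\mu(X)=\min_{Y\supsetneq X,\ |Y|\ge n-q}\mu(Y)$. Sugeno integral: $S_\mu(x)=\max_{A\subseteq\mathcal C}\min(\min_{i\in A}x_i,\mu(A))$ with $\min_{i\in\emptyset}x_i=1$. Training data: $N$ pairs $(x^{(k)},\alpha^{(k)})$, $x^{(k)}\in L^n$, $\alpha^{(k)}\in L$. For $A\subsetneq\mathcal C$, $\gamma_{k,A}=\max_{i\in\mathcal C\setminus A}x^{(k)}_i$. The reduced system $(\Sigma_q)$ has unknowns $\xi_A\in L$ for $A\subsetneq\mathcal C$ with $|A|\ge n-q$ and equations $\min_{A\subsetneq\mathcal C,\ |A|\ge n-q}\max(\gamma_{k,A},\xi_A)=\alpha^{(k)}$, $k=1,\dots,N$; it is consistent if it has a solution in $L$. For such $A$, $f_q(A)=\max_{1\le k\le N}(\gamma_{k,A}\,\epsilon\,\alpha^{(k)})$,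 where $a\,\epsilon\,b=b$ if $a<b$ and $0$ if $a\ge b$. *)

(* Defs.v *)
From HB Require Import structures.
From mathcomp Require Import all_boot all_order all_algebra.
From mathcomp Require Import reals.
Set Implicit Arguments.
Unset Strict Implicit.
Unset Printing Implicit Defensive.
Import Order.TTheory GRing.Theory Num.Theory.
Local Open Scope ring_scope.

(* The value scale L is represented as a predicate on the reals:
   either L = [0,1], or L is a finite chain 0 = xi_1 < ... < xi_l = 1
   (any finite totally ordered set embeds order-isomorphically in [0,1]). *)
Definition scale_ok (R : realType) (L : pred R) : Prop :=
  (forall x, L x <-> (0 <= x <= 1)) \/
  ((exists s : seq R, forall x, L x <-> x \in s) /\ L 0 /\ L 1 /\
   (forall x, L x -> 0 <= x <= 1)).

Section Defs.
Variables (R : realType) (L : pred R) (n : nat).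

Definition capacity (mu : {set 'I_n} -> R) : Prop :=
  [/\ forall A, L (mu A), mu set0 = 0, mu setT = 1 &
      forall A B : {set 'I_n}, A \subset B -> mu A <= mu B].

Definition q_minitive (q : nat) (mu : {set 'I_n} -> R) : Prop :=
  forall X : {set 'I_n}, (#|X| < n - q)%N ->
    mu X = \big[Num.min/1]_(Y : {set 'I_n} | (X \proper Y) && (n - q <= #|Y|)%N) mu Y.

(* Sugeno integral; the empty minimum is 1 *)
Definition sugeno (mu : {set 'I_n} -> R) (x : 'I_n -> R) : R :=
  \big[Num.max/0]_(A : {set 'I_n}) Num.min (\big[Num.min/1]_(i in A) x i) (mu A).

(* gamma_{k,A} = max_{i notin A} x_i (A proper, so the range is nonempty) *)
Definition gamma (x : 'I_n -> R) (A : {set 'I_n}) : R :=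
  \big[Num.max/0]_(i in ~: A) x i.

Definition eps (a b : R) : R := if a < b then b else 0.

Section Data.
Variables (N : nat) (x : 'I_N -> 'I_n -> R) (alpha : 'I_N -> R) (q : nat).

Definition reduced_var (A : {set 'I_n}) : bool :=
  (A \proper setT) && (n - q <= #|A|)%N.

Definition reduced_consistent : Prop :=
  exists xi : {set 'I_n} -> R,
    (forall A, reduced_var A -> L (xi A)) /\
    forall k : 'I_N,
      \big[Num.min/1]_(A : {set 'I_n} | reduced_var A)
         Num.max (gamma (x k) A) (xi A) = alpha k.

Definition f_q (A : {set 'I_n}) : R :=
  \big[Num.max/0]_(k : 'I_N) eps (gamma (x k) A) (alpha k).

End Data.
End Defs.

(* Main.v *)
Require Import Defs.
From HB Require Import structures.
From mathcomp Require Import all_boot all_order all_algebra.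
From mathcomp Require Import reals.
From mathcomp Require Import zify.
Import Order.TTheory GRing.Theory Num.Theory.
Local Open Scope ring_scope.
Set Implicit Arguments.
Unset Strict Implicit.

Section Gen.
Variables (R : realType) (n : nat).
Implicit Types (mu : {set 'I_n} -> R) (y : 'I_n -> R) (A B : {set 'I_n}).

Definition Mall mu y :=
  \big[Num.min/1]_(A : {set 'I_n}) Num.max (gamma y A) (mu A).
Definition Mred q mu y :=
  \big[Num.min/1]_(A : {set 'I_n} | reduced_var q A) Num.max (gamma y A) (mu A).

Lemma gamma_ge0 y A : 0 <= gamma y A.
Proof. exact: bigmax_ge_id. Qed.

Lemma gamma_mono y A B : A \subset B -> gamma y B <= gamma y A.
Proof.
move=> sAB; apply: bigmax_le; first exact: gamma_ge0.
move=> i; rewrite !inE => iB; apply: le_bigmax_cond.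
rewrite inE; apply: contra iB; exact: (subsetP sAB).
Qed.

Lemma sugeno_dual mu y :
  (forall A B, A \subset B -> mu A <= mu B) -> mu setT = 1 ->
  sugeno mu y = Mall mu y.
Proof.
move=> mono m1; apply/le_anti/andP; split.
  apply: bigmax_le.
    apply: le_bigmin => // A _; rewrite le_max gamma_ge0 //.
  move=> B _; apply: le_bigmin.
    by rewrite ge_min -m1 mono ?orbT // subsetT.
  move=> A _; case: (boolP (B \subset A)) => sBA.
    by rewrite ge_min; apply/orP; right; rewrite le_max (mono _ _ sBA) orbT.
  have [i iB iA] : exists2 i, i \in B & i \notin A.
    by apply/subsetPn.
  rewrite ge_min; apply/orP; left; rewrite le_max; apply/orP; left.
  apply: (bigmin_inf i _ _ _ iB).
  by rewrite /gamma; apply: le_bigmax_cond; rewrite inE.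
set t := sugeno mu y.
have t0 : 0 <= t by exact: bigmax_ge_id.
pose A := [set i | t < y i].
rewrite /Mall; apply: (bigmin_inf A) => //.
rewrite ge_max; apply/andP; split.
  rewrite /gamma; apply: bigmax_le => // i; rewrite !inE -leNgt //.
rewrite leNgt; apply/negP => ltt.
have h : Num.min (\big[Num.min/1]_(i in A) y i) (mu A) <= t.
  exact: (le_bigmax _ (fun A => Num.min (\big[Num.min/1]_(i in A) y i) (mu A)) A).
rewrite ge_min (leNgt (mu A)) ltt orbF in h.
have t1 : t < 1.
  rewrite ltNge; apply/negP => t1; move: ltt; rewrite ltNge.
  by rewrite (le_trans _ t1) // -m1 mono // subsetT.
move: h; rewrite leNgt => /negP; apply; apply/bigmin_gtP; split => //.
by move=> i; rewrite inE.
Qed.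

Lemma Mall_red q mu y : q_minitive q mu -> mu setT = 1 ->
  Mall mu y = Mred q mu y.
Proof.
move=> qm m1; apply/le_anti/andP; split.
  apply: le_bigmin; first exact: bigmin_le_id.
  move=> A _; exact: bigmin_le.
apply: le_bigmin; first exact: bigmin_le_id.
have Mr1 : Mred q mu y <= 1 by exact: bigmin_le_id.
move=> A _; case: (boolP (n - q <= #|A|)%N) => hA.
  case: (boolP (A == setT)) => [/eqP ->|nT].
    by rewrite le_max m1 Mr1 orbT.
  by apply: bigmin_le_cond; rewrite /reduced_var properT nT hA.
rewrite (qm A); last by rewrite ltnNge.
rewrite le_max; case: (boolP (Mred q mu y <= gamma y A)) => //= hg.
apply: le_bigmin => // Y /andP[pAY hY].
case: (boolP (Y == setT)) => [/eqP ->|nT]; first by rewrite m1.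
have := bigmin_le_cond 1 (fun A => Num.max (gamma y A) (mu A)) (P := reduced_var q) (j := Y).
rewrite /reduced_var properT nT hY => /(_ isT).
rewrite le_max => /orP[h|//].
move: hg; rewrite (le_trans h) //; apply: gamma_mono; exact: proper_sub.
Qed.

End Gen.

Theorem theorem3 (R : realType) (L : pred R) (n N q : nat)
    (x : 'I_N -> 'I_n -> R) (alpha : 'I_N -> R) :
  scale_ok L ->
  (forall k i, L (x k i)) ->
  (forall k, L (alpha k)) ->
  (1 <= q <= n)%N ->
  (exists mu : {set 'I_n} -> R,
      [/\ capacity L mu, q_minitive q mu &
          forall k : 'I_N, sugeno mu (x k) = alpha k])
  <->
  (reduced_consistent L x alpha q /\
   exists A : {set 'I_n},
     [/\ A \proper setT, #|A| = (n - q)%N & f_q x alpha A = 0]).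
Proof.
move=> hs hx ha /andP[q1 qn].
have [L0 [L1 Lb]] : L 0 /\ L 1 /\ (forall z, L z -> 0 <= z <= 1).
  case: hs => [h|[_ [h0 [h1 h2]]]]; last by [].
  split; first by apply/h; rewrite lexx ler01.
  split; first by apply/h; rewrite ler01 lexx.
  by move=> z /h.
have n1 : (0 < n)%N by apply: leq_trans qn.
have Lmin : forall a b, L a -> L b -> L (Num.min a b).
  by move=> a b La Lb'; rewrite minEle; case: ifP.
have Lmax : forall a b, L a -> L b -> L (Num.max a b).
  by move=> a b La Lb'; rewrite maxEle; case: ifP.
have nT0 : (set0 : {set 'I_n}) != setT.
  apply/eqP => h; move: (cardsT 'I_n); rewrite -h cards0 card_ord => h'.
  by rewrite -h' in n1.
split.
  case=> mu [[Lmu mu0 mu1 mono] qm hs'].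
  have key : forall k, alpha k = Mred q mu (x k).
    by move=> k; rewrite -hs' sugeno_dual // (Mall_red (x k) qm mu1).
  split.
    exists mu; split => // k; by rewrite (key k).
  have fq0 : forall A, mu A = 0 -> f_q x alpha A = 0.
    move=> A muA; apply/le_anti; rewrite bigmax_ge_id andbT.
    apply: bigmax_le => // k _.
    rewrite /eps; case: ifP => // lt.
    have : alpha k <= Num.max (gamma (x k) A) (mu A).
      by rewrite -hs' sugeno_dual // /Mall; exact: (bigmin_inf A).
    by rewrite muA le_max leNgt lt.
  have ex0 : exists A : {set 'I_n}, #|A| = (n-q)%N /\ mu A = 0.
    case: (ltnP 0 (n - q)) => hq; last first.
      by exists set0; rewrite cards0; split => //; lia.
    have := qm set0; rewrite cards0 => /(_ hq); rewrite mu0 => h.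
    case: (pickP (fun Y : {set 'I_n} =>
       (set0 \proper Y) && (n - q <= #|Y|)%N && (mu Y <= 0))) =>
       [Y /andP[/andP[_ hY] mY] | hn]; last first.
      exfalso.
      have : 0 < \big[Num.min/1]_(Y : {set 'I_n} | (set0 \proper Y) && (n - q <= #|Y|)%N) mu Y.
        apply/bigmin_gtP; split; first exact: ltr01.
        move=> Y hY; have := hn Y; rewrite hY /= => /negbT; by rewrite -ltNge.
      by rewrite -h ltxx.
    have mY0 : mu Y = 0.
      by apply/le_anti; rewrite mY; case/andP: (Lb _ (Lmu Y)).
    have down : forall d (Z : {set 'I_n}), #|Z| = (n - q + d)%N -> mu Z = 0 ->
        exists A : {set 'I_n}, #|A| = (n-q)%N /\ mu A = 0.
      elim=> [|d IH] Z; first by rewrite addn0 => cZ mZ; exists Z.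
      move=> cZ mZ; have : (0 < #|Z|)%N by rewrite cZ addnS.
      rewrite card_gt0 => /set0Pn [i iZ].
      apply: (IH (Z :\ i)).
        by move: cZ; rewrite (cardsD1 i Z) iZ /=; lia.
      apply/le_anti/andP; split.
        by rewrite -mZ mono // subD1set.
      by case/andP: (Lb _ (Lmu (Z :\ i))).
    apply: (down (#|Y| - (n-q))%N Y) => //; by rewrite subnKC.
  case: ex0 => A [cA mA]; exists A; split => //; last exact: fq0.
  rewrite properT; apply/eqP => hA; move: cA; rewrite hA cardsT card_ord; lia.
case=> [[xi [Lxi hxi]] [A0 [pA0 cA0 fA0]]].
set fq := f_q x alpha.
have fq0 : forall A : {set 'I_n}, 0 <= fq A by move=> A; exact: bigmax_ge_id.
have fq1 : forall A : {set 'I_n}, fq A <= 1.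
  move=> A; apply: bigmax_le => // k _; rewrite /eps; case: ifP => _ //.
  by case/andP: (Lb _ (ha k)).
have fqL : forall A : {set 'I_n}, L (fq A).
  move=> A; rewrite /fq /f_q; apply: (big_ind L) => // k _; rewrite /eps; by case: ifP.
have fqm : forall A B : {set 'I_n}, A \subset B -> fq A <= fq B.
  move=> A B sAB; apply: bigmax_le => // k _; rewrite /eps; case: ifP => // lt.
  apply: (bigmax_sup k) => //; by rewrite /eps (le_lt_trans (gamma_mono _ sAB) lt).
have fqsol : forall k, Mred q fq (x k) = alpha k.
  move=> k; apply/le_anti/andP; split.
    rewrite -(hxi k); apply: le_bigmin; first exact: bigmin_le_id.
    move=> A rA; apply: (bigmin_inf A) => //.
    rewrite ge_max le_max lexx /= le_max; apply/orP; right.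
    apply: bigmax_le; first by case/andP: (Lb _ (Lxi A rA)).
    move=> k' _; rewrite /eps; case: ifP => lt; last by case/andP: (Lb _ (Lxi A rA)).
    have : alpha k' <= Num.max (gamma (x k') A) (xi A).
      by rewrite -(hxi k'); exact: (bigmin_inf A).
    by rewrite le_max leNgt lt.
  apply: le_bigmin; first by case/andP: (Lb _ (ha k)).
  move=> A rA; rewrite le_max; case: (leP (alpha k) (gamma (x k) A)) => //= lt.
  by rewrite /fq /f_q; apply: (bigmax_sup k) => //; rewrite /eps lt.
pose g := fun Y : {set 'I_n} => if Y == setT then 1 else fq Y.
have gL : forall A : {set 'I_n}, L (g A) by move=> A; rewrite /g; case: ifP.
have g0 : forall A : {set 'I_n}, 0 <= g A by move=> A; rewrite /g; case: ifP => _ //; exact: ler01.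
have gm : forall A B : {set 'I_n}, A \subset B -> g A <= g B.
  move=> A B sAB; rewrite /g; case: (boolP (B == setT)) => [/eqP eB|nB].
    by case: ifP => _.
  have nA : A != setT.
    by apply: contraNneq nB => eA; rewrite eqEsubset subsetT -eA sAB.
  by rewrite (negbTE nA); exact: fqm.
pose mu := fun A : {set 'I_n} => if (n - q <= #|A|)%N then g A
  else \big[Num.min/1]_(Y : {set 'I_n} | (A \proper Y) && (n - q <= #|Y|)%N) g Y.
have muL : forall A : {set 'I_n}, L (mu A).
  move=> A; rewrite /mu; case: ifP => _; first exact: gL.
  by apply: (big_ind L).
have mum : forall A B : {set 'I_n}, A \subset B -> mu A <= mu B.
  move=> A B sAB; rewrite /mu; case: ifPn => hA; case: ifPn => hB.
  - exact: gm.
  - by move: hB; rewrite (leq_trans hA (subset_leq_card sAB)).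
  - apply: (bigmin_inf B) => //; rewrite properEcard sAB hB andbT /=.
    by apply: leq_trans hB; rewrite ltnNge.
  - apply: le_bigmin; first exact: bigmin_le_id.
    move=> Y /andP[pBY hY]; apply: (bigmin_inf Y) => //.
    by rewrite (sub_proper_trans sAB pBY) hY.
have mu1 : mu setT = 1 by rewrite /mu cardsT card_ord leq_subr /g eqxx.
have qm : q_minitive q mu.
  move=> X hX; rewrite {1}/mu leqNgt hX /=; apply: eq_bigr => Y /andP[_ hY].
  by rewrite /mu hY.
exists mu; split => //.
  split => //.
  rewrite /mu cards0; case: ifPn => h0.
    have eA0 : A0 = set0 by apply: cards0_eq; move: h0; rewrite cA0; lia.
    by rewrite /g (negbTE nT0) -eA0.
  apply/le_anti/andP; split; last by apply: le_bigmin => // Y _; exact: g0.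
  apply: (bigmin_inf A0).
    rewrite proper0 cA0 leqnn andbT; apply/eqP => e; move: cA0 h0; rewrite e cards0.
    lia.
  by move: pA0; rewrite properT /g => /negbTE ->; rewrite /fq fA0.
move=> k; rewrite sugeno_dual // (Mall_red (x k) qm mu1) -(fqsol k).
apply: eq_bigr => A /andP[pA hA].
by move: pA; rewrite properT /mu hA /g => /negbTE ->.
Qed.
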